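(* Let $L$ be a finite lattice which is a subdirect product $L\subseteq\prod_{i=1}^t L_i$ of finite subdirectly irreducible lattices. Regard $G(L)$ as a partial join-semilattice, and for $x\in L$ put $\varepsilon(x):=\{a\in G(L):\ a\le x\}$. Then $\varepsilon$ is an isomorphism from $L$ onto the set of all $\bigvee$-ideals of $(G(L),\bigvee)$ ordered by inclusion; in particular $L\setminus\{0\}$ is isomorphic to the join-semilattice of nonempty $\bigvee$-ideals, i.e. $F_\vee(G(L),\bigvee)\cong L\setminus\{0\}$.
   Context: $\pi_i:L\to L_i$ is the surjective restricted projection, $\sigma_i(y):=\bigwedge\{x\in L:\pi_i(x)=y\}$ its smallest pre-image map, and $G(L):=\bigcup_{i=1}^t\sigma_i(L_i\setminus\{0\})$ (the scaffolding). The partial join on $G(L)$: for $B\subseteq G(L)$, $\bigvee B$ (computed in $L$) is defined in $(G(L),\bigvee)$ iff it lies in $G(L)$. A subset $A\subseteq G(L)$ is a $\bigvee$-ideal if it is hereditary ($a\in A$, $b\in G(L)$, $b\le a$ imply $b\in A$) and closed under the defined partial joins ($B\subseteq A$ and $\bigvee B\in G(L)$ imply $\bigvee B\in A$). $F_\vee(G(L),\bigvee)$ denotes the join-semilattice of nonempty $\bigvee$-ideals under inclusion. *)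

(* Defs.v *)
From HB Require Import structures.
From mathcomp Require Import all_boot all_order.
Set Implicit Arguments. Unset Strict Implicit. Unset Printing Implicit Defensive.
Import Order.Theory.
Local Open Scope order_scope.

Definition lattice_congruence (d : Order.disp_t) (T : latticeType d) (th : rel T) : Prop :=
  [/\ (forall x, th x x),
      (forall x y, th x y -> th y x),
      (forall x y z, th x y -> th y z -> th x z),
      (forall x y z, th x y -> th (x `&` z) (y `&` z))
    & (forall x y z, th x y -> th (x `|` z) (y `|` z))].

Definition nontrivial_rel (T : eqType) (th : rel T) : Prop :=
  exists x y, x != y /\ th x y.

Definition subdirectly_irreducible (d : Order.disp_t) (T : latticeType d) : Prop :=
  (exists x y : T, x != y) /\
  exists th : rel T, [/\ lattice_congruence th, nontrivial_rel th &
    forall th' : rel T, lattice_congruence th' -> nontrivial_rel th' ->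
      forall x y, th x y -> th' x y].

Definition lattice_hom (d d' : Order.disp_t) (T : latticeType d) (U : latticeType d')
  (f : T -> U) : Prop :=
  (forall x y, f (x `&` y) = f x `&` f y) /\ (forall x y, f (x `|` y) = f x `|` f y).

(* L is a subdirect product of the L i via the (restricted) projections pi i:
   each pi i is a surjective lattice homomorphism and the pi i jointly separate
   points (i.e. x |-> (pi i x)_i embeds L into the product). *)
Definition subdirect_product (d : Order.disp_t) (L : finTBLatticeType d) (t : nat)
  (dI : 'I_t -> Order.disp_t) (Li : forall i, finTBLatticeType (dI i))
  (pi : forall i, L -> Li i) : Prop :=
  [/\ (forall i, lattice_hom (pi i)),
      (forall i (y : Li i), exists x : L, pi i x = y)
    & (forall x y : L, (forall i, pi i x = pi i y) -> x = y)].

Section Scaffolding.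
Variables (d : Order.disp_t) (L : finTBLatticeType d) (t : nat)
  (dI : 'I_t -> Order.disp_t) (Li : forall i, finTBLatticeType (dI i))
  (pi : forall i, L -> Li i).

Definition sigma (i : 'I_t) (y : Li i) : L := \meet_(x : L | pi i x == y) x.

Definition scaffold : {set L} :=
  [set a : L | [exists i : 'I_t, [exists y : Li i, (y != \bot) && (a == sigma y)]]].

Definition join_ideal (A : {set L}) : Prop :=
  [/\ A \subset scaffold,
      (forall a b, a \in A -> b \in scaffold -> b <= a -> b \in A)
    & (forall B : {set L}, B \subset A ->
         \join_(b in B) b \in scaffold -> \join_(b in B) b \in A)].

Definition epsilon (x : L) : {set L} := [set a in scaffold | a <= x].
End Scaffolding.

(* Main.v *)
Require Import Defs.
From HB Require Import structures.
From mathcomp Require Import all_boot all_order.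
Import Order.Theory.
Local Open Scope order_scope.
Set Implicit Arguments. Unset Strict Implicit.

Section Aux.
Variables (d : Order.disp_t) (L : finTBLatticeType d) (t : nat)
  (dI : 'I_t -> Order.disp_t) (Li : forall i, finTBLatticeType (dI i))
  (pi : forall i, L -> Li i).
Hypothesis hS : subdirect_product pi.

Lemma pi_meet i x y : pi i (x `&` y) = pi i x `&` pi i y.
Proof. by case: hS => /(_ i) [h _] _ _. Qed.
Lemma pi_join i x y : pi i (x `|` y) = pi i x `|` pi i y.
Proof. by case: hS => /(_ i) [_ h] _ _. Qed.
Lemma pi_surj i (y : Li i) : exists x, pi i x = y.
Proof. by case: hS => _ h _; apply: h. Qed.

Lemma pi_mono (i : 'I_t) x y : x <= y -> pi i x <= pi i y.
Proof. by move/meet_idPl => h; apply/meet_idPl; rewrite -pi_meet h. Qed.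

Lemma pi_bot i : pi i \bot = \bot.
Proof.
have [x hx] := pi_surj (\bot : Li i).
by apply/eqP; rewrite -lex0 -hx pi_mono // le0x.
Qed.

Lemma pi_joins i (B : {set L}) :
  pi i (\join_(b in B) b) = \join_(b in B) pi i b.
Proof.
by apply: (big_morph (pi i)); [exact: pi_join | exact: pi_bot].
Qed.

Lemma sigma_le i (y : Li i) x : y <= pi i x -> sigma pi y <= x.
Proof.
move=> h; have [z hz] := pi_surj y.
apply: (@meets_max _ _ _ (z `&` x)); last by rewrite leIr.
by rewrite pi_meet hz; apply/eqP/meet_idPl.
Qed.

Lemma pi_sigma i (y : Li i) : pi i (sigma pi y) = y.
Proof.
have [z hz] := pi_surj y.
apply/le_anti/andP; split.
  by rewrite -{2}hz; apply: pi_mono; apply: sigma_le; rewrite hz.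
apply/meet_idPl.
suff -> : pi i (sigma pi y) = \meet_(x : L | pi i x == y) pi i x.
  by apply/meet_idPl/meetsP => x /eqP ->.
rewrite /sigma; apply: (big_morph (pi i)); first exact: pi_meet.
have [x hx] := pi_surj (\top : Li i).
by apply/le_anti; rewrite lex1 -hx pi_mono // lex1.
Qed.

Lemma sigmaP i (y : Li i) x : (sigma pi y <= x) = (y <= pi i x).
Proof.
apply/idP/idP; last exact: sigma_le.
by move/(pi_mono i); rewrite pi_sigma.
Qed.

Lemma sigma_neq0 i (y : Li i) : y != \bot -> sigma pi y != \bot.
Proof. by apply: contraNN => /eqP h; rewrite -(pi_sigma y) h pi_bot. Qed.

Lemma bot_notin : \bot \notin scaffold pi.
Proof.
apply/negP; rewrite inE => /existsP [i /existsP [y /andP [hy /eqP h]]].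
by move: (sigma_neq0 hy); rewrite -h eqxx.
Qed.

Lemma sigma_in i (y : Li i) : y != \bot -> sigma pi y \in scaffold pi.
Proof. by move=> hy; rewrite inE; apply/existsP; exists i; apply/existsP; exists y; rewrite hy eqxx. Qed.

Lemma join_eps x : \join_(b in epsilon pi x) b = x.
Proof.
case: hS => _ _ sep.
apply: sep => i; apply/le_anti/andP; split.
  by apply: pi_mono; apply/joinsP => b; rewrite inE => /andP [].
have [h0|hn] := eqVneq (pi i x) \bot; first by rewrite h0 le0x.
rewrite -sigmaP; have hm : sigma pi (pi i x) \in epsilon pi x.
  by rewrite /epsilon inE sigmaP lexx andbT; apply: sigma_in.
exact: (joins_sup _ hm).
Qed.

End Aux.

Theorem mainTheorem5 (d : Order.disp_t) (L : finTBLatticeType d) (t : nat)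
  (dI : 'I_t -> Order.disp_t) (Li : forall i, finTBLatticeType (dI i))
  (pi : forall i, L -> Li i) :
  subdirect_product pi ->
  (forall i, subdirectly_irreducible (Li i)) ->
  [/\ (forall x : L, join_ideal pi (epsilon pi x)),
      (forall A : {set L}, join_ideal pi A -> exists x : L, epsilon pi x = A),
      (forall x y : L, (x <= y) = (epsilon pi x \subset epsilon pi y))
    & (forall x : L, (epsilon pi x == set0) = (x == \bot))].
Proof.
move=> hS _; split.
- move=> x; split.
  + by apply/subsetP => a; rewrite inE => /andP [].
  + move=> a b; rewrite !inE => /andP [_ ha] -> /= hb; exact: le_trans hb ha.
  + move=> B /subsetP hB hG; rewrite /epsilon inE hG /=; apply/joinsP => b /hB.
    by rewrite inE => /andP [].
- move=> A [/subsetP AG hered closed]; exists (\join_(b in A) b).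
  apply/setP => a; rewrite inE; apply/idP/idP; last first.
    by move=> ha; rewrite AG //=; exact: (joins_sup _ ha).
  case/andP => aG; move: (aG); rewrite inE => /existsP [i /existsP [y /andP [hy /eqP ->]]] hle.
  set w := pi i (\join_(b in A) b).
  have hyw : y <= w by rewrite /w -sigmaP.
  have hy0 := hy.
  have wn : w != \bot by apply: contraNN hy => /eqP h; rewrite -lex0 -h.
  set B := [set c in A | c <= sigma pi w].
  have eqB : \join_(c in B) c = sigma pi w.
    apply/le_anti/andP; split.
      by apply/joinsP => c; rewrite inE => /andP [].
    rewrite (sigmaP hS) /w (pi_joins hS i A) (pi_joins hS i B).
    apply/joinsP => b bA.
    have [h0|hn] := eqVneq (pi i b) \bot; first by rewrite h0 le0x.
    have sb : sigma pi (pi i b) \in A.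
      by apply: (hered b) => //; [exact: sigma_in | rewrite sigmaP].
    rewrite -{1}(pi_sigma hS (pi i b)); apply: joins_sup.
    rewrite inE sb /= (sigmaP hS) (pi_sigma hS); apply: pi_mono => //; exact: (joins_sup _ bA).
  have wA : sigma pi w \in A.
    rewrite -eqB; apply: closed.
      by apply/subsetP => c; rewrite inE => /andP [].
    by rewrite eqB sigma_in.
  apply: (hered _ _ wA).
    exact: (sigma_in pi hy0).
  by rewrite (sigmaP hS) (pi_sigma hS).
- move=> x y; apply/idP/idP.
    move=> hxy; apply/subsetP => a; rewrite !inE => /andP [-> h] /=.
    exact: le_trans h hxy.
  move=> hs; rewrite -(join_eps hS x) -(join_eps hS y).
  exact: le_joins.
- move=> x; apply/idP/idP.
    by move/eqP => h; rewrite -(join_eps hS x) h big_set0.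
  move/eqP => ->; apply/eqP/setP => a; rewrite !inE lex0.
  case: eqVneq => [->|]; last by rewrite andbF.
  by rewrite andbT; move: (bot_notin hS); rewrite inE => /negbTE.
Qed.
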